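(* Let $K\in\mathcal S_2$ be nonempty and bounded, and let $u\in S^1$. Then the Steiner symmetral $S_u(K)$ also belongs to $\mathcal S_2$.
   Context: For $x\in\mathbb R^n$, $B(x,1)$ is the closed Euclidean unit ball centered at $x$. The class $\mathcal S_n$ of ball-bodies consists of all intersections of families of closed Euclidean unit balls in $\mathbb R^n$ (equivalently, sets of the form $A^c=\bigcap_{x\in A}B(x,1)$, $A\subseteq\mathbb R^n$). For a compact convex set $K$ and $u\in S^{n-1}$, for each $x$ in the orthogonal projection $P_{u^\perp}(K)$ write $K\cap(x+\mathbb Ru)=[x+a(x)u,x+b(x)u]$; the Steiner symmetral is $S_u(K)=\{x+yu: x\in P_{u^\perp}(K),\ |y|\le |b(x)-a(x)|/2\}$. *)

(* Defs.v *)
From Stdlib Require Import Reals.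
Open Scope R_scope.

Definition pt := (R * R)%type.

Definition padd (p q : pt) : pt := (fst p + fst q, snd p + snd q).
Definition pscale (t : R) (p : pt) : pt := (t * fst p, t * snd p).
Definition dot (p q : pt) : R := fst p * fst q + snd p * snd q.
Definition norm (p : pt) : R := sqrt (dot p p).
Definition dist (p q : pt) : R := norm (padd p (pscale (-1) q)).

Definition unit_ball (x : pt) : pt -> Prop := fun y => dist x y <= 1.

Definition ball_hull (A : pt -> Prop) : pt -> Prop :=
  fun y => forall x, A x -> unit_ball x y.

Definition in_S2 (K : pt -> Prop) : Prop :=
  exists A : pt -> Prop, forall y, K y <-> ball_hull A y.

Definition nonempty_set (K : pt -> Prop) : Prop := exists p, K p.
Definition bounded_set (K : pt -> Prop) : Prop :=
  exists M, forall p, K p -> norm p <= M.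

(* Steiner symmetral S_u(K) = { x + y u : x in P_{u^perp}(K),
   |y| <= |b(x) - a(x)|/2 }, where K ∩ (x + R u) = [x + a(x) u, x + b(x) u]. *)
Definition steiner (u : pt) (K : pt -> Prop) : pt -> Prop :=
  fun p => exists (x : pt) (y a b : R),
    p = padd x (pscale y u) /\
    dot x u = 0 /\
    (forall t, K (padd x (pscale t u)) <-> Rmin a b <= t <= Rmax a b) /\
    Rabs y <= Rabs (b - a) / 2.

(* Main.v *)
From Coquelicot Require Import Coquelicot.
From Stdlib Require Import Lra Psatz Classical FunctionalExtensionality.
Require Import Defs.
From Stdlib Require Import Reals.
Open Scope R_scope.

Definition Rf z := sqrt (1 - z*z).
Definition gf z := z / sqrt (1 - z*z).
Definition Gm y := y / sqrt (1 + y*y).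

Lemma is_derive_eqv (f : R -> R) x l1 l2 : is_derive f x l1 -> l1 = l2 -> is_derive f x l2.
Proof. intros H ->; exact H. Qed.

Lemma Rf_pos z : -1 < z < 1 -> 0 < Rf z.
Proof. intros Hz. unfold Rf. apply sqrt_lt_R0. nra. Qed.

Lemma Rf_sq z : -1 <= z <= 1 -> Rf z * Rf z = 1 - z*z.
Proof. intros Hz. unfold Rf. apply sqrt_sqrt. nra. Qed.

Lemma Rf_ge0 z : 0 <= Rf z.
Proof. apply sqrt_pos. Qed.

Lemma gf_der z : -1 < z < 1 -> is_derive gf z (/ (Rf z * Rf z * Rf z)).
Proof.
intros Hz. unfold gf, Rf.
assert (Hpos : 0 < 1 - z*z) by nra.
assert (Hp := sqrt_lt_R0 _ Hpos).
assert (Hpp := sqrt_sqrt _ (Rlt_le _ _ Hpos)).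
auto_derive.
- replace (1 + - (z*z)) with (1 - z*z) by ring. repeat split; lra.
- replace (1 + - (z*z)) with (1 - z*z) by ring.
  set (p := sqrt (1 - z*z)) in *.
  field_simplify; try lra.
  replace (z^2) with (1 - p^2) by (simpl; nra). field. lra.
Qed.

Lemma Gm_der y : is_derive Gm y (/ (sqrt (1+y*y) * sqrt (1+y*y) * sqrt (1+y*y))).
Proof.
unfold Gm.
assert (Hpos : 0 < 1 + y*y) by nra.
assert (Hp := sqrt_lt_R0 _ Hpos).
assert (Hpp := sqrt_sqrt _ (Rlt_le _ _ Hpos)).
auto_derive.
- repeat split; lra.
- set (p := sqrt (1 + y*y)) in *.
  field_simplify; try lra.
  replace (y^2) with (p^2 - 1) by (simpl; nra). field. lra.
Qed.

Lemma Rf_der z : -1 < z < 1 -> is_derive Rf z (- gf z).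
Proof.
intros Hz. unfold gf, Rf.
assert (Hpos : 0 < 1 - z*z) by nra.
assert (Hp := sqrt_lt_R0 _ Hpos).
auto_derive.
- replace (1 + - (z*z)) with (1 - z*z) by ring. lra.
- replace (1 + - (z*z)) with (1 - z*z) by ring.
  field. lra.
Qed.

Lemma Gm_gf z : -1 < z < 1 -> Gm (gf z) = z.
Proof.
intros Hz. unfold Gm, gf.
assert (Hpos : 0 < 1 - z*z) by nra.
assert (Hp := sqrt_lt_R0 _ Hpos).
assert (Hpp := sqrt_sqrt _ (Rlt_le _ _ Hpos)).
set (p := sqrt (1 - z*z)) in *.
replace (1 + z / p * (z / p)) with ((/ p) * (/ p)) by (field_simplify; [|lra|lra]; replace (z^2) with (1 - p^2) by (simpl; nra); field; lra).
rewrite sqrt_square by (left; apply Rinv_0_lt_compat; lra).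
field. lra.
Qed.

Lemma Gm_bound y : -1 < Gm y < 1.
Proof.
unfold Gm.
assert (Hpos : 0 < 1 + y*y) by nra.
assert (Hp := sqrt_lt_R0 _ Hpos).
assert (Hpp := sqrt_sqrt _ (Rlt_le _ _ Hpos)).
set (p := sqrt (1 + y*y)) in *.
assert (Ha : Rabs y < p).
{ apply Rsqr_lt_abs_0 || idtac. 
  rewrite <- (Rabs_pos_eq p) by lra. apply Rsqr_lt_abs_0. unfold Rsqr. lra. }
split.
- apply (Rmult_lt_reg_r p); [lra|]. unfold Rdiv. rewrite Rmult_assoc, Rinv_l by lra.
  apply Rabs_def2 in Ha. lra.
- apply (Rmult_lt_reg_r p); [lra|]. unfold Rdiv. rewrite Rmult_assoc, Rinv_l by lra.
  apply Rabs_def2 in Ha. lra.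
Qed.

Lemma gf_Gm y : gf (Gm y) = y.
Proof.
unfold Gm, gf.
assert (Hpos : 0 < 1 + y*y) by nra.
assert (Hp := sqrt_lt_R0 _ Hpos).
assert (Hpp := sqrt_sqrt _ (Rlt_le _ _ Hpos)).
set (p := sqrt (1 + y*y)) in *.
replace (1 - y / p * (y / p)) with ((/ p) * (/ p)) by (field_simplify; [|lra|lra]; replace (y^2) with (p^2 - 1) by (simpl; nra); field; lra).
rewrite sqrt_square by (left; apply Rinv_0_lt_compat; lra).
field. lra.
Qed.

Lemma der_cont (f : R -> R) x l : is_derive f x l -> continuity_pt f x.
Proof.
intros H. apply is_derive_Reals in H.
apply derivable_continuous_pt. exists l. exact H.
Qed.

Lemma mono (f df : R -> R) a b : a <= b ->
  (forall x, a < x < b -> is_derive f x (df x)) ->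
  (forall x, a <= x <= b -> continuity_pt f x) ->
  (forall x, a < x < b -> 0 <= df x) -> f a <= f b.
Proof.
intros Hab Hd Hc Hp.
destruct (MVT_gen f a b (fun x => Rmax 0 (df x))) as [c [Hc1 Hc2]].
- rewrite Rmin_left, Rmax_right by lra. intros x Hx.
  apply is_derive_eqv with (df x); auto. rewrite Rmax_right; auto.
- rewrite Rmin_left, Rmax_right by lra. auto.
- assert (0 <= Rmax 0 (df c)) by apply Rmax_l. nra.
Qed.

Lemma Gm_incr y1 y2 : y1 <= y2 -> Gm y1 <= Gm y2.
Proof.
intros H. apply (mono Gm (fun y => / (sqrt (1+y*y) * sqrt (1+y*y) * sqrt (1+y*y)))); auto.
- intros x _. apply Gm_der.
- intros x _. eapply der_cont. apply Gm_der.
- intros x _. left. apply Rinv_0_lt_compat.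
  assert (0 < sqrt (1+x*x)) by (apply sqrt_lt_R0; nra). 
  repeat apply Rmult_lt_0_compat; auto.
Qed.

Lemma Gm_strict y1 y2 : y1 < y2 -> Gm y1 < Gm y2.
Proof.
intros H. destruct (Gm_incr y1 y2) as [h|h]; [lra|auto|].
assert (gf (Gm y1) = gf (Gm y2)) by (rewrite h; auto).
rewrite !gf_Gm in H0. lra.
Qed.

Lemma gf_incr z1 z2 : -1 < z1 < 1 -> -1 < z2 < 1 -> z1 <= z2 -> gf z1 <= gf z2.
Proof.
intros H1 H2 H. destruct (Rle_or_lt (gf z1) (gf z2)) as [h|h]; auto.
apply Gm_strict in h. rewrite !Gm_gf in h by auto. lra.
Qed.

Definition G al be c := (gf (c - al) + gf (c - be)) / 2.
Definition dG al be c := (/ (Rf (c-al) * Rf (c-al) * Rf (c-al)) + / (Rf (c-be) * Rf (c-be) * Rf (c-be))) / 2.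
Definition Kf al be c := Gm (G al be c) - c.

Lemma shift_der (f : R -> R) al c l : is_derive f (c - al) l -> is_derive (fun x => f (x - al)) c l.
Proof.
intros H. eapply is_derive_eqv.
apply (is_derive_comp f (fun x => x - al)). exact H.
auto_derive; auto. 
unfold scal; simpl. unfold mult; simpl. ring.
Qed.

Lemma G_der al be c : -1 < c - al < 1 -> -1 < c - be < 1 -> is_derive (G al be) c (dG al be c).
Proof.
intros H1 H2. unfold G, dG.
apply is_derive_ext with (f := fun x => /2 * (plus (gf (x - al)) (gf (x - be)))).
{ intros t. unfold plus; simpl. field. }
eapply is_derive_eqv.
apply (is_derive_scal (fun x => plus (gf (x - al)) (gf (x - be))) c (/2)).
apply (is_derive_plus (fun x => gf (x - al)) (fun x => gf (x - be))).
apply shift_der, gf_der; auto. apply shift_der, gf_der; auto.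
unfold plus; simpl. field. split; apply Rgt_not_eq, Rf_pos; auto.
Qed.

Lemma K_der al be c : -1 < c - al < 1 -> -1 < c - be < 1 ->
  is_derive (Kf al be) c (dG al be c * / (sqrt (1+G al be c*G al be c) * sqrt (1+G al be c*G al be c) * sqrt (1+G al be c*G al be c)) - 1).
Proof.
intros H1 H2. unfold Kf.
apply is_derive_ext with (f := fun x => minus (Gm (G al be x)) x).
{ intros t. unfold minus, plus, opp; simpl. ring. }
eapply is_derive_eqv.
apply (is_derive_minus (fun x => Gm (G al be x)) (fun x => x)).
apply (is_derive_comp Gm (G al be)). apply Gm_der. apply G_der; auto.
apply is_derive_id.
unfold minus, plus, opp, scal, one; simpl. unfold mult; simpl. ring.
Qed.

Lemma pm (m P Q : R) : 0 <= m -> 0 <= P -> 0 <= Q -> 2*(m*m) <= P*P+Q*Q ->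
  2*(m*m*m) <= P*P*P+Q*Q*Q.
Proof.
intros Hm HP HQ H.
assert (H1 : (P*P+Q*Q)*(P*P+Q*Q)*(P*P+Q*Q) <= 2*((P*P*P+Q*Q*Q)*(P*P*P+Q*Q*Q))).
{ assert (0 <= (P-Q)*(P-Q)*(P*P*P*P + 2*P*P*P*Q + 2*P*Q*Q*Q + Q*Q*Q*Q)).
  { apply Rmult_le_pos. apply Rle_0_sqr.
    assert (0 <= P*P*P*P) by (repeat apply Rmult_le_pos; auto).
    assert (0 <= P*P*P*Q) by (repeat apply Rmult_le_pos; auto).
    assert (0 <= P*Q*Q*Q) by (repeat apply Rmult_le_pos; auto).
    assert (0 <= Q*Q*Q*Q) by (repeat apply Rmult_le_pos; auto). lra. }
  nra. }
assert (H2 : 8*((m*m)*(m*m)*(m*m)) <= (P*P+Q*Q)*(P*P+Q*Q)*(P*P+Q*Q)).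
{ assert (0 <= m*m) by nra.
  assert (2*(m*m)*(2*(m*m)) <= (P*P+Q*Q)*(P*P+Q*Q)) by (apply Rmult_le_compat; lra).
  assert (0 <= 2*(m*m)*(2*(m*m))) by nra.
  assert (2*(m*m)*(2*(m*m))*(2*(m*m)) <= (P*P+Q*Q)*(P*P+Q*Q)*(P*P+Q*Q)) by (apply Rmult_le_compat; lra).
  lra. }
assert (0 <= P*P*P+Q*Q*Q) by (assert (0 <= P*P*P) by (repeat apply Rmult_le_pos; auto); assert (0 <= Q*Q*Q) by (repeat apply Rmult_le_pos; auto); lra).
assert (0 <= m*m*m) by (repeat apply Rmult_le_pos; auto).
destruct (Rle_or_lt (2*(m*m*m)) (P*P*P+Q*Q*Q)) as [h|h]; auto.
exfalso.
assert ((P*P*P+Q*Q*Q)*(P*P*P+Q*Q*Q) < (2*(m*m*m))*(2*(m*m*m))) by (apply Rmult_le_0_lt_compat; lra).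
nra.
Qed.

Lemma Kder_pos al be c : -1 < c - al < 1 -> -1 < c - be < 1 ->
  0 <= dG al be c * / (sqrt (1+G al be c*G al be c) * sqrt (1+G al be c*G al be c) * sqrt (1+G al be c*G al be c)) - 1.
Proof.
intros H1 H2.
assert (Hp := Rf_pos _ H1). assert (Hq := Rf_pos _ H2).
assert (Hp2 := Rf_sq (c-al) ltac:(lra)). assert (Hq2 := Rf_sq (c-be) ltac:(lra)).
unfold dG, G, gf. fold (Rf (c-al)) (Rf (c-be)).
set (a := c - al) in *. set (b := c - be) in *.
set (p := Rf a) in *. set (q := Rf b) in *.
set (m := sqrt (1 + (a / p + b / q) / 2 * ((a / p + b / q) / 2))).
assert (Hmm : m * m = 1 + (a / p + b / q) / 2 * ((a / p + b / q) / 2)).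
{ apply sqrt_sqrt. generalize (Rle_0_sqr ((a/p+b/q)/2)); unfold Rsqr; lra. }
assert (Hm : 0 < m). { apply sqrt_lt_R0. generalize (Rle_0_sqr ((a/p+b/q)/2)); unfold Rsqr; lra. }
assert (HA : a/p * (a/p) = /p * /p - 1). { field_simplify; try lra. replace (a^2) with (1 - p^2) by (simpl; nra). field. lra. }
assert (HB : b/q * (b/q) = /q * /q - 1). { field_simplify; try lra. replace (b^2) with (1 - q^2) by (simpl; nra). field. lra. }
assert (H : 2*(m*m*m) <= /p * /p * /p + /q * /q * /q).
{ apply pm; try lra. left; apply Rinv_0_lt_compat; lra. left; apply Rinv_0_lt_compat; lra.
  rewrite Hmm. set (A := a/p) in *. set (B := b/q) in *. generalize (Rle_0_sqr (A-B)); unfold Rsqr. intro. replace ((A + B) / 2 * ((A + B) / 2)) with ((A*A + B*B + 2*A*B)/4) by field. lra. }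
replace (/ (p*p*p)) with (/p * /p * /p) by (field; lra).
replace (/ (q*q*q)) with (/q * /q * /q) by (field; lra).
assert (0 < m*m*m) by (repeat apply Rmult_lt_0_compat; lra).
match goal with |- 0 <= ?X - 1 => cut (1 <= X); [lra|] end.
apply (Rmult_le_reg_r (m*m*m)); auto.
rewrite Rmult_1_l. rewrite (Rmult_assoc _ (/ (m*m*m))), Rinv_l by lra. lra.
Qed.

Lemma K_mono al be c1 c2 : -1 < c1 - al < 1 -> -1 < c1 - be < 1 ->
  -1 < c2 - al < 1 -> -1 < c2 - be < 1 -> c1 <= c2 -> Kf al be c1 <= Kf al be c2.
Proof.
intros. apply (mono (Kf al be) (fun c => dG al be c * / (sqrt (1+G al be c*G al be c) * sqrt (1+G al be c*G al be c) * sqrt (1+G al be c*G al be c)) - 1)); auto.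
- intros x Hx. apply K_der; lra.
- intros x Hx. eapply der_cont. apply K_der; lra.
- intros x Hx. apply Kder_pos; lra.
Qed.

Lemma Rf_cont x c : -1 <= c - x <= 1 -> continuity_pt (fun t => Rf (t - x)) c.
Proof.
intros H. unfold Rf.
apply (continuity_pt_comp (fun t => 1 - (t - x)*(t-x)) sqrt).
- apply (der_cont _ _ (- (2*(c-x)))). auto_derive; auto. ring.
- apply continuity_pt_sqrt. assert (0 <= (c-x)*(c-x) <= 1). split. apply Rle_0_sqr. nra. lra.
Qed.
Definition Df al be sg c := Rf (c - sg) - (Rf (c - al) + Rf (c - be)) / 2.

Lemma Df_der al be sg c : -1 < c - al < 1 -> -1 < c - be < 1 -> -1 < c - sg < 1 ->
  is_derive (Df al be sg) c (G al be c - gf (c - sg)).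
Proof.
intros H1 H2 H3. unfold Df.
apply is_derive_ext with (f := fun x => minus (Rf (x - sg)) (/2 * (plus (Rf (x - al)) (Rf (x - be))))).
{ intros t. unfold minus, plus, opp; simpl. unfold Rdiv. ring. }
eapply is_derive_eqv.
apply (is_derive_minus (fun x => Rf (x - sg)) (fun x => /2 * plus (Rf (x-al)) (Rf (x-be)))).
apply shift_der, Rf_der; auto.
apply (is_derive_scal (fun x => plus (Rf (x-al)) (Rf (x-be)))).
apply (is_derive_plus (fun x => Rf (x-al)) (fun x => Rf (x-be))); apply shift_der, Rf_der; auto.
unfold minus, plus, opp, G; simpl. unfold Rdiv. ring. 
Qed.

Lemma Df_cont al be sg c : -1 <= c - al <= 1 -> -1 <= c - be <= 1 -> -1 <= c - sg <= 1 ->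
  continuity_pt (Df al be sg) c.
Proof.
intros H1 H2 H3.
assert (E : Df al be sg = minus_fct (fun t => Rf (t - sg)) (mult_fct (fct_cte (/2)) (plus_fct (fun t => Rf (t - al)) (fun t => Rf (t - be))))).
{ apply functional_extensionality. intros t. unfold Df, minus_fct, mult_fct, plus_fct, fct_cte. unfold Rdiv. ring. }
rewrite E.
apply continuity_pt_minus. apply Rf_cont; auto.
apply continuity_pt_mult. apply continuity_pt_const. intros a b; reflexivity.
apply continuity_pt_plus; apply Rf_cont; auto.
Qed.

Lemma z0_between al be s0 : -1 < s0 - al < 1 -> -1 < s0 - be < 1 ->
  (s0 - al <= Gm (G al be s0) <= s0 - be) \/ (s0 - be <= Gm (G al be s0) <= s0 - al).
Proof.
intros H1 H2. unfold G.
destruct (Rle_or_lt (s0 - al) (s0 - be)) as [h|h].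
- left. assert (gf (s0-al) <= gf (s0-be)) by (apply gf_incr; auto).
  assert (A1 := Gm_incr (gf (s0-al)) ((gf (s0 - al) + gf (s0 - be)) / 2) ltac:(lra)).
  assert (A2 := Gm_incr ((gf (s0 - al) + gf (s0 - be)) / 2) (gf (s0-be)) ltac:(lra)).
  rewrite Gm_gf in A1, A2 by auto. lra.
- right. assert (gf (s0-be) <= gf (s0-al)) by (apply gf_incr; auto; lra).
  assert (A1 := Gm_incr (gf (s0-be)) ((gf (s0 - al) + gf (s0 - be)) / 2) ltac:(lra)).
  assert (A2 := Gm_incr ((gf (s0 - al) + gf (s0 - be)) / 2) (gf (s0-al)) ltac:(lra)).
  rewrite Gm_gf in A1, A2 by auto. lra.
Qed.

Lemma sign_pos al be s0 c : -1 < s0 - al < 1 -> -1 < s0 - be < 1 ->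
  -1 < c - al < 1 -> -1 < c - be < 1 -> s0 <= c ->
  gf (c - (s0 - Gm (G al be s0))) <= G al be c.
Proof.
intros H1 H2 H3 H4 H5.
assert (Hk := K_mono al be s0 c H1 H2 H3 H4 H5). unfold Kf in Hk.
assert (Hz := z0_between al be s0 H1 H2).
destruct (Rle_or_lt (gf (c - (s0 - Gm (G al be s0)))) (G al be c)) as [h|h]; auto.
apply Gm_strict in h. rewrite Gm_gf in h by lra. lra.
Qed.

Lemma sign_neg al be s0 c : -1 < s0 - al < 1 -> -1 < s0 - be < 1 ->
  -1 < c - al < 1 -> -1 < c - be < 1 -> c <= s0 ->
  G al be c <= gf (c - (s0 - Gm (G al be s0))).
Proof.
intros H1 H2 H3 H4 H5.
assert (Hk := K_mono al be c s0 H3 H4 H1 H2 H5). unfold Kf in Hk.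
assert (Hz := z0_between al be s0 H1 H2).
destruct (Rle_or_lt (G al be c) (gf (c - (s0 - Gm (G al be s0))))) as [h|h]; auto.
apply Gm_strict in h. rewrite Gm_gf in h by lra. lra.
Qed.

Lemma cmp al be s0 s : -1 < s0 - al < 1 -> -1 < s0 - be < 1 ->
  -1 <= s - al <= 1 -> -1 <= s - be <= 1 ->
  Df al be (s0 - Gm (G al be s0)) s0 <= Df al be (s0 - Gm (G al be s0)) s.
Proof.
intros H1 H2 H3 H4.
assert (Hz := z0_between al be s0 H1 H2).
set (sg := s0 - Gm (G al be s0)).
destruct (Rle_or_lt s0 s) as [h|h].
- apply (mono (Df al be sg) (fun c => G al be c - gf (c - sg))); auto.
  + intros x Hx. apply Df_der; unfold sg; lra.
  + intros x Hx. apply Df_cont; unfold sg; lra.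
  + intros x Hx. assert (gf (x - sg) <= G al be x) by (apply sign_pos; lra). lra.
- cut (- Df al be sg s <= - Df al be sg s0); [lra|].
  apply (mono (fun c => - Df al be sg c) (fun c => - (G al be c - gf (c - sg)))); try lra.
  + intros x Hx. apply (is_derive_opp (Df al be sg)). apply Df_der; unfold sg; lra.
  + intros x Hx. apply (continuity_pt_opp (Df al be sg)). apply Df_cont; unfold sg; lra.
  + intros x Hx. assert (G al be x <= gf (x - sg)) by (apply sign_neg; lra). lra.
Qed.

Definition Wset al be ep s y :=
  -1 <= s - al <= 1 /\ -1 <= s - be <= 1 /\ Rabs y <= Rf (s - al) /\ Rabs y <= Rf (s - be) /\
  2 * Rabs y <= Rf (s - al) + Rf (s - be) - 2 * ep.

Lemma Wset_swap al be ep s y : Wset al be ep s y -> Wset be al ep s y.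
Proof. unfold Wset. intros; lra. Qed.

Lemma sq_le a b : 0 <= b -> a*a <= b*b -> a <= b.
Proof.
intros Hb H. destruct (Rle_or_lt a b) as [h|h]; auto.
assert (b*b < a*a) by (apply Rmult_le_0_lt_compat; lra). lra.
Qed.

Lemma sq_lt a b : 0 <= a -> a < b -> a*a < b*b.
Proof. intros. apply Rmult_le_0_lt_compat; lra. Qed.

Lemma abs_sq w : Rabs w * Rabs w = w * w.
Proof. rewrite <- Rabs_mult. apply Rabs_pos_eq. destruct (Rle_or_lt 0 w); [apply Rmult_le_pos; lra| ]. 
replace (w*w) with ((-w)*(-w)) by ring. apply Rmult_le_pos; lra. Qed.

Lemma bound_disk x w : -1 <= x <= 1 -> Rabs w <= Rf x -> x*x + w*w <= 1.
Proof.
intros Hx Hw. assert (H := Rf_sq x Hx). rewrite <- (abs_sq w).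
assert (0 <= Rabs w) by apply Rabs_pos.
assert (Rabs w * Rabs w <= Rf x * Rf x) by (apply Rmult_le_compat; lra). lra.
Qed.

Lemma excl_disk x w : -1 <= x <= 1 -> Rf x < Rabs w -> 1 < x*x + w*w.
Proof.
intros Hx Hw. assert (H := Rf_sq x Hx). rewrite <- (abs_sq w).
assert (Rf x * Rf x < Rabs w * Rabs w) by (apply sq_lt; auto; apply Rf_ge0). lra.
Qed.

Lemma excl_far x w : ~ (-1 <= x <= 1) -> 1 < x*x + w*w.
Proof.
intros Hx. assert (0 <= w*w) by apply Rle_0_sqr.
destruct (Rle_or_lt x (-1)).
- assert (1 < x*x). { replace (x*x) with ((-x)*(-x)) by ring. replace 1 with (1*1) by ring.
   destruct (Rle_lt_or_eq_dec x (-1)); auto. apply sq_lt; lra. subst. lra. }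
  lra.
- assert (1 < x) by lra. assert (1 < x*x) by (replace 1 with (1*1) by ring; apply sq_lt; lra). lra.
Qed.

Lemma Rf_between z a b : -1 <= a <= 1 -> -1 <= b <= 1 -> (a <= z <= b \/ b <= z <= a) ->
  Rf a <= Rf z \/ Rf b <= Rf z.
Proof.
intros Ha Hb Hz. unfold Rf.
destruct (Rle_or_lt (z*z) (a*a)).
- left. apply sqrt_le_1_alt. lra.
- right. apply sqrt_le_1_alt.
  assert (z*z <= b*b); [|lra].
  destruct Hz as [Hz|Hz].
  + destruct (Rle_or_lt 0 z).
    * apply Rmult_le_compat; lra.
    * assert (z*z <= a*a); [|lra]. replace (a*a) with ((-a)*(-a)) by ring. replace (z*z) with ((-z)*(-z)) by ring.
      apply Rmult_le_compat; lra.
  + destruct (Rle_or_lt 0 z).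
    * assert (z*z <= a*a); [|lra]. apply Rmult_le_compat; lra.
    * replace (b*b) with ((-b)*(-b)) by ring. replace (z*z) with ((-z)*(-z)) by ring.
      apply Rmult_le_compat; lra.
Qed.

Lemma lemE al be s0 s : (s0 - al = 1 \/ s0 - al = -1) -> -1 <= s - al <= 1 -> -1 <= s - be <= 1 ->
  -1 <= s0 - be <= 1 -> Rf (s - be) <= Rf (s0 - be) + Rf (s - al).
Proof.
intros H0 H1 H2 H3.
assert (E1 := Rf_sq _ H1). assert (E2 := Rf_sq _ H2). assert (E3 := Rf_sq _ H3).
assert (P1 := Rf_ge0 (s - al)). assert (P3 := Rf_ge0 (s0 - be)).
apply sq_le; [lra|].
assert (0 <= Rf (s0 - be) * Rf (s - al)) by (apply Rmult_le_pos; auto).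
destruct H0 as [H0|H0].
- assert (0 <= (s0 - s) * (1 - (s0 - be))) by (apply Rmult_le_pos; lra).
  replace s0 with (al + 1) in * by lra. lra.
- assert (0 <= (s - s0) * (1 + (s0 - be))) by (apply Rmult_le_pos; lra).
  replace s0 with (al - 1) in * by lra. lra.
Qed.

Definition Good al be ep s0 t0 := exists sg k,
  (forall s y, Wset al be ep s y -> (s-sg)*(s-sg) + (y-k)*(y-k) <= 1) /\
  1 < (s0-sg)*(s0-sg) + (t0-k)*(t0-k).

Lemma Good_swap al be ep s0 t0 : Good be al ep s0 t0 -> Good al be ep s0 t0.
Proof.
intros [sg [k [H1 H2]]]. exists sg, k. split; auto.
intros s y Hw. apply H1. apply Wset_swap; auto.
Qed.

Lemma abs_bounds y : - Rabs y <= y <= Rabs y.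
Proof. split; [|apply Rle_abs]. assert (- y <= Rabs y) by (rewrite <- Rabs_Ropp; apply Rle_abs). lra. Qed.

Lemma abs_shift y k r : k <= 0 -> Rabs y <= r + k -> Rabs (y - k) <= r /\ Rabs (y + k) <= r.
Proof.
intros Hk H. assert (B := abs_bounds y).
split; apply Rabs_le; lra.
Qed.

Lemma good_far al be ep s0 t0 : ~ (-1 <= s0 - al <= 1) -> Good al be ep s0 t0.
Proof.
intros H. exists al, 0. split.
- intros s y [W1 [W2 [W3 [W4 W5]]]]. replace (y - 0) with y by ring. apply bound_disk; auto.
- apply excl_far; auto.
Qed.

Lemma good_high al be ep s0 t0 : -1 <= s0 - al <= 1 -> Rf (s0 - al) < Rabs t0 -> Good al be ep s0 t0.
Proof.
intros H H'. exists al, 0. split.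
- intros s y [W1 [W2 [W3 [W4 W5]]]]. replace (y - 0) with y by ring. apply bound_disk; auto.
- replace (t0 - 0) with t0 by ring. apply excl_disk; auto.
Qed.

Lemma good_tangent al be ep s0 t0 : -1 < s0 - al < 1 -> -1 < s0 - be < 1 ->
  Rabs t0 <= Rf (s0 - al) -> Rabs t0 <= Rf (s0 - be) ->
  Rf (s0 - al) + Rf (s0 - be) - 2 * ep < 2 * Rabs t0 -> Good al be ep s0 t0.
Proof.
intros H1 H2 H3 H4 H5.
assert (Hz := z0_between al be s0 H1 H2).
assert (Hc := cmp al be s0).
set (z0 := Gm (G al be s0)) in *.
set (sg := s0 - z0) in *.
set (h := (Rf (s0 - al) + Rf (s0 - be)) / 2 - ep).
set (k := h - Rf z0).
assert (Hrz : Rabs t0 <= Rf z0).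
{ destruct (Rf_between z0 (s0 - al) (s0 - be)) as [h1|h1]; try lra. }
assert (Hk : k < 0) by (unfold k, h; lra).
assert (Hb : forall s y, Wset al be ep s y -> -1 <= s - sg <= 1 /\ Rabs y <= Rf (s - sg) + k).
{ intros s y [W1 [W2 [W3 [W4 W5]]]]. split. unfold sg; lra.
  assert (C := Hc s H1 H2 W1 W2). unfold Df in C. fold z0 sg in C.
  replace (s0 - sg) with z0 in C by (unfold sg; ring). unfold k, h. lra. }
assert (Hz1 : -1 <= z0 <= 1) by lra.
assert (Hrz0 := Rf_ge0 z0).
destruct (Rle_or_lt 0 t0) as [ht|ht].
- exists sg, k. split.
  + intros s y Hw. destruct (Hb s y Hw) as [B1 B2]. apply bound_disk; auto.
    apply (abs_shift y k); auto; lra.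
  + replace (s0 - sg) with z0 by (unfold sg; ring). apply excl_disk; auto.
    rewrite Rabs_pos_eq in H5 |- *; unfold k, h in *; lra.
- exists sg, (-k). split.
  + intros s y Hw. destruct (Hb s y Hw) as [B1 B2]. apply bound_disk; auto.
    replace (y - - k) with (y + k) by ring. apply (abs_shift y k); auto; lra.
  + replace (s0 - sg) with z0 by (unfold sg; ring). apply excl_disk; auto.
    rewrite Rabs_left in H5; [|lra]. rewrite Rabs_left; unfold k, h in *; lra.
Qed.

Lemma good_end al be ep s0 t0 : (s0 - al = 1 \/ s0 - al = -1) -> -1 <= s0 - be <= 1 ->
  Rabs t0 <= Rf (s0 - al) ->
  Rf (s0 - al) + Rf (s0 - be) - 2 * ep < 2 * Rabs t0 -> Good al be ep s0 t0.
Proof.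
intros H1 H2 H3 H4.
assert (R0 : Rf (s0 - al) = 0).
{ unfold Rf. replace (1 - (s0 - al) * (s0 - al)) with 0 by (destruct H1 as [e|e]; rewrite e; ring). apply sqrt_0. }
rewrite R0 in H3, H4.
assert (A := Rabs_pos t0). assert (B := abs_bounds t0).
assert (T0 : t0 = 0) by lra.
set (k := Rf (s0 - be) / 2 - ep).
assert (Hk : k < 0) by (unfold k; lra).
exists al, k. split.
- intros s y Hw. destruct Hw as [W1 [W2 [W3 [W4 W5]]]].
  assert (E := lemE al be s0 s H1 W1 W2 H2).
  apply bound_disk; auto. apply (abs_shift y k); [lra|]. unfold k; lra.
- rewrite T0. assert (0 < (0 - k) * (0 - k)) by (apply Rmult_lt_0_compat; lra).
  destruct H1 as [e|e]; rewrite e; lra.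
Qed.

Lemma core al be ep s0 t0 : ~ Wset al be ep s0 t0 -> Good al be ep s0 t0.
Proof.
intros HW.
destruct (classic (-1 <= s0 - al <= 1)) as [Ra|Ra]; [|apply good_far; auto].
destruct (classic (-1 <= s0 - be <= 1)) as [Rb|Rb]; [|apply Good_swap, good_far; auto].
destruct (Rle_or_lt (Rabs t0) (Rf (s0 - al))) as [Ta|Ta]; [|apply good_high; auto].
destruct (Rle_or_lt (Rabs t0) (Rf (s0 - be))) as [Tb|Tb]; [|apply Good_swap, good_high; auto].
destruct (Rle_or_lt (2 * Rabs t0) (Rf (s0 - al) + Rf (s0 - be) - 2 * ep)) as [Tc|Tc].
{ exfalso. apply HW. unfold Wset; auto. }
destruct (classic (-1 < s0 - al < 1 /\ -1 < s0 - be < 1)) as [[I1 I2]|NI].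
- apply good_tangent; auto.
- destruct (classic (s0 - al = 1 \/ s0 - al = -1)) as [Ea|Ea].
  + apply good_end; auto.
  + apply Good_swap. assert (~ (-1 < s0 - be < 1)) by (intro; apply NI; split; auto; lra).
    apply good_end; try lra.
Qed.

Definition vv (u : pt) : pt := (- snd u, fst u).
Definition Sc (u p : pt) := dot p (vv u).
Definition Tc (u p : pt) := dot p u.

Lemma dist_iff u x y : dot u u = 1 ->
  (Defs.dist x y <= 1 <-> (Sc u y - Sc u x)*(Sc u y - Sc u x) + (Tc u y - Tc u x)*(Tc u y - Tc u x) <= 1).
Proof.
intros Hu. destruct u as [u1 u2], x as [x1 x2], y as [y1 y2].
unfold Defs.dist, Defs.norm, Sc, Tc, vv, dot, padd, pscale in *; simpl in *.
match goal with |- _ <-> ?E <= 1 => replace E with (((x1 + -1 * y1) * (x1 + -1 * y1) + (x2 + -1 * y2) * (x2 + -1 * y2)) * (u1*u1+u2*u2)) by ring end.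
rewrite Hu, Rmult_1_r.
set (z := (x1 + -1 * y1) * (x1 + -1 * y1) + (x2 + -1 * y2) * (x2 + -1 * y2)).
assert (0 <= z) by (unfold z; generalize (Rle_0_sqr (x1 + -1*y1)) (Rle_0_sqr (x2 + -1*y2)); unfold Rsqr; lra).
split; intro H0.
- rewrite <- (sqrt_sqrt z) by auto. assert (0 <= sqrt z) by apply sqrt_pos.
  assert (sqrt z * sqrt z <= 1 * 1) by (apply Rmult_le_compat; lra). lra.
- rewrite <- sqrt_1. apply sqrt_le_1_alt. auto.
Qed.

Definition mk (u : pt) (s t : R) : pt := padd (pscale s (vv u)) (pscale t u).

Lemma Sc_mk u s t : dot u u = 1 -> Sc u (mk u s t) = s.
Proof. intros Hu. destruct u as [u1 u2]. unfold Sc, mk, vv, dot, padd, pscale in *; simpl in *.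
transitivity (s * (u1*u1+u2*u2)). ring. rewrite Hu. ring. Qed.

Lemma Tc_mk u s t : dot u u = 1 -> Tc u (mk u s t) = t.
Proof. intros Hu. destruct u as [u1 u2]. unfold Tc, mk, vv, dot, padd, pscale in *; simpl in *.
transitivity (t * (u1*u1+u2*u2)). ring. rewrite Hu. ring. Qed.

Lemma Sc_line u x t : Sc u (padd x (pscale t u)) = Sc u x.
Proof. destruct u, x. unfold Sc, vv, dot, padd, pscale; simpl. ring. Qed.

Lemma Tc_line u x t : Tc u (padd x (pscale t u)) = Tc u x + t * dot u u.
Proof. destruct u, x. unfold Tc, dot, padd, pscale; simpl. ring. Qed.

Lemma from_sq w r : w*w + r*r <= 1 -> -1 <= w <= 1 /\ Rabs r <= Rf w.
Proof.
intros H. assert (0 <= r*r) by apply Rle_0_sqr. assert (0 <= w*w) by apply Rle_0_sqr.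
split.
- destruct (classic (-1 <= w <= 1)) as [h|h]; auto. exfalso.
  assert (T := excl_far w 0 h). lra.
- rewrite <- sqrt_Rsqr_abs. unfold Rf, Rsqr. apply sqrt_le_1_alt. lra.
Qed.

Lemma abs_le_inv r R : Rabs r <= R -> -R <= r <= R.
Proof. intros H. assert (B := abs_bounds r). lra. Qed.

Lemma memb (K A : pt -> Prop) u p c : dot u u = 1 -> (forall y, K y <-> ball_hull A y) ->
  K p -> A c -> -1 <= Sc u p - Sc u c <= 1 /\ Rabs (Tc u p - Tc u c) <= Rf (Sc u p - Sc u c).
Proof.
intros Hu HK Hp Hc. apply HK in Hp. specialize (Hp c Hc). unfold unit_ball in Hp.
apply (dist_iff u) in Hp; auto. apply from_sq; auto.
Qed.

Lemma abs_maxmin a b : Rabs (b - a) = Rmax a b - Rmin a b.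
Proof.
unfold Rmax, Rmin. destruct (Rle_dec a b).
- rewrite Rabs_pos_eq; lra.
- rewrite Rabs_left; lra.
Qed.

Lemma Wpair al be ta tb s y : Wset al be (Rabs (ta - tb) / 2) s y ->
  ta - Rf (s - al) <= tb + Rf (s - be) - 2 * Rabs y.
Proof.
intros [W1 [W2 [W3 [W4 W5]]]]. assert (ta - tb <= Rabs (ta - tb)) by apply Rle_abs. lra.
Qed.

Lemma steiner_W (K A : pt -> Prop) u z c c' : dot u u = 1 -> (forall y, K y <-> ball_hull A y) ->
  steiner u K z -> A c -> A c' ->
  Wset (Sc u c) (Sc u c') (Rabs (Tc u c - Tc u c') / 2) (Sc u z) (Tc u z).
Proof.
intros Hu HK [x [y [a [b [Hz [Hx [Hl Hy]]]]]]] Hc Hc'.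
assert (ES : Sc u z = Sc u x) by (rewrite Hz; apply Sc_line).
assert (ET : Tc u z = y) by (rewrite Hz, Tc_line, Hu; unfold Tc; rewrite Hx; ring).
rewrite ES, ET. rewrite abs_maxmin in Hy.
set (lo := Rmin a b) in *. set (hi := Rmax a b) in *.
assert (Hmm : lo <= hi) by (unfold lo, hi; apply Rmin_Rmax).
assert (Klo : K (padd x (pscale lo u))) by (apply Hl; lra).
assert (Khi : K (padd x (pscale hi u))) by (apply Hl; lra).
assert (Tlo : Tc u (padd x (pscale lo u)) = lo) by (rewrite Tc_line, Hu; unfold Tc; rewrite Hx; ring).
assert (Thi : Tc u (padd x (pscale hi u)) = hi) by (rewrite Tc_line, Hu; unfold Tc; rewrite Hx; ring).
destruct (memb K A u _ c Hu HK Klo Hc) as [A1 A2].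
destruct (memb K A u _ c' Hu HK Klo Hc') as [B1 B2].
destruct (memb K A u _ c Hu HK Khi Hc) as [C1 C2].
destruct (memb K A u _ c' Hu HK Khi Hc') as [D1 D2].
rewrite !Sc_line in A1, A2, B1, B2, C1, C2, D1, D2. rewrite Tlo in A2, B2. rewrite Thi in C2, D2.
apply abs_le_inv in A2. apply abs_le_inv in B2. apply abs_le_inv in C2. apply abs_le_inv in D2.
assert (Y := abs_bounds y).
unfold Wset. clear Hl HK Klo Khi Hz. clearbody lo hi. split; [lra|]. split; [lra|]. split; [lra|]. split; [lra|].
destruct (Rle_or_lt 0 (Tc u c - Tc u c')).
- rewrite (Rabs_pos_eq (Tc u c - Tc u c')) by lra. lra.
- rewrite (Rabs_left (Tc u c - Tc u c')) by lra. lra.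
Qed.

Lemma line_eq (q u : pt) t : q = padd (padd q (pscale (-t) u)) (pscale t u).
Proof. destruct q, u. unfold padd, pscale; simpl. f_equal; ring. Qed.

Lemma W_steiner (K A : pt -> Prop) u q : dot u u = 1 -> (forall y, K y <-> ball_hull A y) ->
  (exists c, A c) ->
  (forall c c', A c -> A c' -> Wset (Sc u c) (Sc u c') (Rabs (Tc u c - Tc u c') / 2) (Sc u q) (Tc u q)) ->
  steiner u K q.
Proof.
intros Hu HK [c0 Hc0] HW.
set (s := Sc u q). set (y := Tc u q).
set (Rc := fun c => Rf (s - Sc u c)).
assert (Hp : forall c c', A c -> A c' -> Tc u c - Rc c <= Tc u c' + Rc c' - 2 * Rabs y).
{ intros c c' H1 H2. apply Wpair. apply HW; auto. }
set (E1 := fun r => exists c, A c /\ r = Tc u c - Rc c).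
set (E2 := fun r => exists c, A c /\ r = - (Tc u c + Rc c)).
assert (Y := Rabs_pos y).
destruct (Raxioms.completeness E1) as [lo [Lo1 Lo2]].
{ exists (Tc u c0 + Rc c0). intros r [c [Hc ->]]. specialize (Hp c c0 Hc Hc0). lra. }
{ exists (Tc u c0 - Rc c0). exists c0. auto. }
destruct (Raxioms.completeness E2) as [m2 [M1 M2]].
{ exists (- (Tc u c0 - Rc c0)). intros r [c [Hc ->]]. specialize (Hp c0 c Hc0 Hc). lra. }
{ exists (- (Tc u c0 + Rc c0)). exists c0. auto. }
set (hi := - m2).
assert (P1 : forall c, A c -> Tc u c - Rc c <= lo) by (intros c Hc; apply Lo1; exists c; auto).
assert (P2 : forall c, A c -> hi <= Tc u c + Rc c).
{ intros c Hc. assert (- (Tc u c + Rc c) <= m2) by (apply M1; exists c; auto). unfold hi; lra. }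
assert (P3 : forall t, (forall c, A c -> Tc u c - Rc c <= t) -> lo <= t).
{ intros t Ht. apply Lo2. intros r [c [Hc ->]]. auto. }
assert (P4 : forall t, (forall c, A c -> t <= Tc u c + Rc c) -> t <= hi).
{ intros t Ht. cut (m2 <= - t); [unfold hi; lra|]. apply M2. intros r [c [Hc ->]]. specialize (Ht c Hc). lra. }
assert (Key : lo + 2 * Rabs y <= hi).
{ apply P4. intros c' Hc'. cut (lo <= Tc u c' + Rc c' - 2 * Rabs y); [lra|].
  apply P3. intros c Hc. apply Hp; auto. }
exists (padd q (pscale (- y) u)), y, lo, hi.
split; [apply line_eq|].
split; [change (Tc u (padd q (pscale (- y) u)) = 0); rewrite Tc_line, Hu; unfold y; ring|].
split.
- intros t. rewrite Rmin_left, Rmax_right by lra.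
  set (P := padd (padd q (pscale (- y) u)) (pscale t u)).
  assert (SP : Sc u P = s) by (unfold P; rewrite !Sc_line; auto).
  assert (TP : Tc u P = t) by (unfold P; rewrite !Tc_line, Hu; unfold y, Tc; ring).
  split.
  + intros HP.
    assert (B : forall c, A c -> Tc u c - Rc c <= t /\ t <= Tc u c + Rc c).
    { intros c Hc. destruct (memb K A u P c Hu HK HP Hc) as [_ M].
      rewrite SP, TP in M. apply abs_le_inv in M. unfold Rc. lra. }
    split; [apply P3|apply P4]; intros c Hc; apply B; auto.
  + intros Ht. apply HK. intros c Hc. unfold unit_ball. apply (dist_iff u); auto.
    rewrite SP, TP. apply bound_disk.
    * destruct (HW c c Hc Hc) as [W1 _]. auto.
    * apply Rabs_le. assert (P1c := P1 c Hc). assert (P2c := P2 c Hc). unfold Rc in *. lra.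
- rewrite (Rabs_pos_eq (hi - lo)) by lra. lra.
Qed.

Lemma dot_uu u : norm u = 1 -> dot u u = 1.
Proof.
intros H. unfold norm in H.
assert (0 <= dot u u) by (destruct u; unfold dot; simpl; generalize (Rle_0_sqr r) (Rle_0_sqr r0); unfold Rsqr; lra).
rewrite <- (sqrt_sqrt (dot u u)) by auto. rewrite H. ring.
Qed.

Theorem theorem4p1 (K : pt -> Prop) (u : pt) :
  in_S2 K -> nonempty_set K -> bounded_set K -> norm u = 1 ->
  in_S2 (steiner u K).
Proof.
intros [A HA] _ [M HM] Hn.
assert (Hu := dot_uu u Hn).
assert (HK : forall y, K y <-> ball_hull A y) by exact HA.
assert (Ane : exists c, A c).
{ apply NNPP. intro HnA.
  assert (KP : K (Rabs M + 1, 0)).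
  { apply HK. intros x Hx. exfalso. apply HnA. exists x; auto. }
  apply HM in KP. unfold norm, dot in KP; simpl in KP.
  replace ((Rabs M + 1) * (Rabs M + 1) + 0 * 0) with (Rsqr (Rabs M + 1)) in KP by (unfold Rsqr; ring).
  rewrite sqrt_Rsqr in KP by (generalize (Rabs_pos M); lra).
  generalize (Rle_abs M). lra. }
exists (fun c => forall z, steiner u K z -> unit_ball c z).
intros y. split.
- intros Hs c Hc. apply Hc. auto.
- intros H. apply NNPP. intro Hns.
  destruct (classic (forall c c', A c -> A c' -> Wset (Sc u c) (Sc u c') (Rabs (Tc u c - Tc u c') / 2) (Sc u y) (Tc u y))) as [Hall|Hn1].
  { apply Hns. apply (W_steiner K A); auto. }
  apply not_all_ex_not in Hn1. destruct Hn1 as [c Hn1].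
  apply not_all_ex_not in Hn1. destruct Hn1 as [c' Hn1].
  apply imply_to_and in Hn1. destruct Hn1 as [Hc Hn1].
  apply imply_to_and in Hn1. destruct Hn1 as [Hc' Hn1].
  destruct (core _ _ _ _ _ Hn1) as [sg [k [G1 G2]]].
  assert (HC : forall z, steiner u K z -> unit_ball (mk u sg k) z).
  { intros z Hz. unfold unit_ball. apply (dist_iff u); auto.
    rewrite Sc_mk, Tc_mk by auto.
    replace ((Sc u z - sg) * (Sc u z - sg)) with ((Sc u z - sg) * (Sc u z - sg)) by ring.
    apply G1. apply (steiner_W K A); auto. }
  specialize (H (mk u sg k) HC). unfold unit_ball in H. apply (dist_iff u) in H; auto.
  rewrite Sc_mk, Tc_mk in H by auto. lra.
Qed.
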